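(* The lexicographically least infinite binary overlap-free word is $001001\,\overline{\mathbf{t}}$.
   Context: An overlap is a word $axaxa$ with $a$ a letter and $x$ a (possibly empty) word; a word is overlap-free if it contains no overlap as a factor. $\mu$ is the morphism $0\mapsto01$, $1\mapsto10$ on $\{0,1\}$, and $\overline{\mathbf{t}}=\mu^\omega(1)=1001011001101001\cdots$ is the fixed point of $\mu$ beginning with $1$. Infinite binary words are ordered lexicographically with $0<1$. *)

(* Defs.v *)
From mathcomp Require Import all_boot.
Set Implicit Arguments. Unset Strict Implicit. Unset Printing Implicit Defensive.

(* Binary alphabet {0,1} encoded as bool: 0 = false, 1 = true.
   Infinite binary words are functions nat -> bool. *)
Definition infword := nat -> bool.

Definition is_overlap (u : seq bool) : Prop :=
  exists (a : bool) (x : seq bool), u = [:: a] ++ x ++ [:: a] ++ x ++ [:: a].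

Definition factor_of (u : seq bool) (w : infword) : Prop :=
  exists i : nat, u = mkseq (fun k => w (i + k)) (size u).

Definition overlap_free (w : infword) : Prop :=
  forall u : seq bool, factor_of u w -> ~ is_overlap u.

Definition mu (s : seq bool) : seq bool := flatten (map (fun b => [:: b; ~~ b]) s).

(* tbar = mu^omega(1): its n-th letter is the n-th letter of mu^(n+1)(1),
   a word of length 2^(n+1) > n which is a prefix of tbar. *)
Definition tbar : infword := fun n => nth false (iter n.+1 mu [:: true]) n.

Definition prepend (p : seq bool) (w : infword) : infword :=
  fun n => if n < size p then nth false p n else w (n - size p).

Definition lex_lt (u v : infword) : Prop :=
  exists n : nat, (forall k, k < n -> u k = v k) /\ u n = false /\ v n = true.
Definition lex_le (u v : infword) : Prop := (forall n, u n = v n) \/ lex_lt u v.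

(* Main.v *)
Require Import Defs.
From mathcomp Require Import all_boot.
From Stdlib Require Import Lia Classical.
Set Implicit Arguments. Unset Strict Implicit. Unset Printing Implicit Defensive.
Set Warnings "-deprecated".

Ltac nlia := repeat match goal with
  | H : is_true (_ <= _) |- _ => move/leP in H
  | H : is_true (_ < _) |- _ => move/ltP in H
  | |- is_true (_ <= _) => apply/leP
  | |- is_true (_ < _) => apply/ltP
  | H : context [ double ?x ] |- _ => rewrite -(addnn x) in H
  | |- context [ double ?x ] => rewrite -(addnn x)
  | H : context [ predn ?x ] |- _ => rewrite -(subn1 x) in H
  | |- context [ predn ?x ] => rewrite -(subn1 x)
  end; unfold addn, addn_rec, subn, subn_rec, muln, muln_rec in *; lia.

Definition M j := iter j mu [:: true].

Lemma mu_cons b s : mu (b :: s) = b :: ~~ b :: mu s.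
Proof. by []. Qed.

Lemma mu_cat s1 s2 : mu (s1 ++ s2) = mu s1 ++ mu s2.
Proof. by rewrite /mu map_cat flatten_cat. Qed.

Lemma size_mu s : size (mu s) = (size s).*2.
Proof. elim: s => [|b s IH] //=; by rewrite IH. Qed.

Lemma nth_mu s k : k < size s ->
  nth false (mu s) k.*2 = nth false s k /\ nth false (mu s) k.*2.+1 = ~~ nth false s k.
Proof.
elim: s k => [|b s IH] [|k] //= Hk.
by apply: IH.
Qed.

Lemma size_M j : size (M j) = 2 ^ j.
Proof. elim: j => [|j IH] //. by rewrite /M iterS -/(M j) size_mu IH expnS mul2n. Qed.

Lemma M_prefix j : exists t, M j.+1 = M j ++ t.
Proof.
elim: j => [|j [t Ht]]; first by exists [:: false].
exists (mu t). by rewrite /M iterS -/(M j.+1) {1}Ht mu_cat.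
Qed.

Lemma nth_M j j' k : j <= j' -> k < 2 ^ j -> nth false (M j') k = nth false (M j) k.
Proof.
move=> Hj Hk; elim: j' Hj => [|j' IH] Hj.
  by move: Hj; rewrite leqn0 => /eqP ->.
case: (ltngtP j j'.+1) Hj => // [Hlt _|-> _ //].
have [t Ht] := M_prefix j'. rewrite Ht nth_cat size_M.
have -> : k < 2 ^ j' by apply: leq_trans Hk _; rewrite leq_exp2l.
by apply: IH.
Qed.

Lemma tbar_M j k : k < 2 ^ j -> tbar k = nth false (M j) k.
Proof.
move=> Hk. rewrite /tbar -/(M k.+1).
have Hk2 : k < 2 ^ k.+1 by rewrite expnS mul2n -addnn; apply: (leq_trans (@ltn_expl 2 k _)) => //; apply: leq_addr.
by rewrite -(@nth_M k.+1 (maxn j k.+1)) ?leq_maxr // (@nth_M j (maxn j k.+1)) ?leq_maxl.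
Qed.

Lemma tbar_eo k : tbar k.*2 = tbar k /\ tbar k.*2.+1 = ~~ tbar k.
Proof.
have Hk : k < 2 ^ k.+1 by rewrite expnS mul2n -addnn; apply: (leq_trans (@ltn_expl 2 k _)) => //; apply: leq_addr.
have H2 : k.*2.+1 < 2 ^ k.+2 by rewrite expnS mul2n ltn_Sdouble.
have := @nth_mu (M k.+1) k; rewrite size_M => /(_ Hk) [E1 E2].
rewrite !(tbar_M H2) (tbar_M Hk) /M iterS -/(M k.+1) E2.
by rewrite (tbar_M (leq_trans (leqnSn _) H2)) /M iterS -/(M k.+1) E1.
Qed.
Definition OVL (w : infword) i p := 0 < p /\ forall t, t <= p -> w (i + t) = w (i + t + p).
Definition OF (w : infword) := forall i p, ~ OVL w i p.

Lemma mkseq_split (f : nat -> bool) m n :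
  mkseq f (m + n) = mkseq f m ++ mkseq (fun k => f (m + k)) n.
Proof. by rewrite /mkseq iotaD map_cat [0 + m]addnC iotaDl -map_comp. Qed.

Lemma mkseq_S (f : nat -> bool) p : mkseq f p.+1 = f 0 :: mkseq (fun k => f k.+1) p.
Proof. by rewrite -add1n mkseq_split. Qed.

Lemma free_of_OF w : OF w -> overlap_free w.
Proof.
move=> H u [i Hu] [a [x Hx]].
apply: (H i (size x).+1); split => // t Ht.
set n := size u in Hu.
have Hw k : k < n -> nth false u k = w (i + k) by move=> Hk; rewrite Hu nth_mkseq.
have Hn : n = (size x).*2.+3.
  rewrite /n Hx /= !size_cat /= size_cat /= -addnn; nlia.
have Hv : u = (a :: x) ++ (a :: x) ++ [:: a] by rewrite Hx.
rewrite -addnA -Hw ?Hn; last by nlia.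
rewrite -Hw ?Hn; last by nlia.
rewrite Hv !nth_cat /=.
case: (ltngtP t (size x).+1) Ht => // [Hlt|->] _.
-  have -> : (t + (size x).+1 < (size x).+1) = false by apply/negbTE; rewrite -leqNgt leq_addl.
  have -> : (t + (size x).+1 - (size x).+1) = t by rewrite addnK.
  by rewrite Hlt.
- rewrite subnn /=.
  have -> : ((size x).+1 + (size x).+1 < (size x).+1) = false by apply/negbTE; rewrite -leqNgt leq_addl.
  by rewrite addnK ltnn subnn.
Qed.

Lemma OF_of_free w : overlap_free w -> OF w.
Proof.
move=> H i p [Hp Ht].
set f := fun k => w (i + k).
apply: (H (mkseq f (p + p + 1))).
  by exists i; rewrite size_mkseq.
case: p Hp Ht => // p _ Ht.
exists (f 0), (mkseq (fun k => f k.+1) p).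
rewrite !mkseq_split.
have E : mkseq (fun k => f (p.+1 + k)) p.+1 = mkseq f p.+1.
  apply: (@eq_from_nth _ false); rewrite ?size_mkseq // => k Hk.
  rewrite !nth_mkseq // /f addnA [i + _]addnC.
  rewrite (Ht k (ltnW Hk)); congr w; nlia.
rewrite E.
have -> : mkseq (fun k => f (p.+1 + p.+1 + k)) 1 = [:: f 0].
  have E1 := Ht 0 (leq0n _). have E2 := Ht p.+1 (leqnn _). rewrite addn0 in E1.
  rewrite /mkseq /= /f !addn0 E1 E2. by rewrite addnA.
by rewrite mkseq_S -catA.
Qed.

Definition Blk (z : infword) s (y : infword) :=
  forall k, z (s + k.*2) = y k /\ z (s + k.*2).+1 = ~~ y k.

Lemma even_half n : ~~ odd n -> n = (n./2).*2.
Proof. move=> H. by rewrite -{1}(odd_double_half n) (negbTE H) add0n. Qed.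

Lemma odd_half n : odd n -> n = (n./2).*2.+1.
Proof. move=> H. by rewrite -{1}(odd_double_half n) H add1n. Qed.

Lemma blk_step z s y u : Blk z s y -> s <= u -> ~~ odd (u - s) -> z u.+1 = ~~ z u.
Proof.
move=> Hb Hsu Hev. have [_ E2] := Hb (u - s)./2.
have E : s + ((u - s)./2).*2 = u by rewrite -even_half // subnKC.
by rewrite -E E2 (proj1 (Hb _)).
Qed.

Lemma alt_val (z : infword) a n :
  (forall t, t < n -> z (a + t).+1 = ~~ z (a + t)) -> z (a + n) = z a (+) odd n.
Proof.
elim: n => [|n IH] H; first by rewrite addn0 addbF.
rewrite addnS H // IH => [|t Ht]; last by apply: H; apply: ltnW.
by rewrite /= addbN.
Qed.

Lemma G_odd z s y i p : Blk z s y -> s <= i.+1 -> odd p -> ~ OVL z i p.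
Proof.
move=> Hb Hs Hp [Hp0 Ht].
have Halt : forall t, t < p -> z (i + p + t).+1 = ~~ z (i + p + t).
  move=> t Htp.
  case Hu: (odd (i + p + t - s)).
  -
    have Hv : s <= i + t.
      case: (leqP s (i + t)) => // Hlt.
      have Ei : s = i.+1 by nlia.
      have Et : t = 0 by nlia.
      have E : i + p + t - s = p.-1 by nlia.
      move: Hp Hu; rewrite E; case: (p) Hp0 => // p' _ /=. by case: (odd p').
    have Hev : ~~ odd (i + t - s).
      have : i + p + t - s = (i + t - s) + p by nlia.
      move=> E; move: Hu; rewrite E oddD Hp. by case: (odd _).
    have E1 := Ht t (ltnW Htp).
    have E2 := Ht t.+1 Htp.
    have B := blk_step Hb Hv Hev.
    have -> : (i + p + t).+1 = i + t.+1 + p by nlia.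
    rewrite -E2.
    have -> : i + p + t = i + t + p by nlia.
    by rewrite -E1 addnS.
  - apply: (blk_step Hb); [nlia | by rewrite Hu].
have := alt_val Halt. rewrite Hp -(Ht p (leqnn p)).
by case: (z (i + p)).
Qed.

Lemma G_even_ge z s y i q : Blk z s y -> s <= i -> OVL z i q.*2 -> exists i', OVL y i' q.
Proof.
move=> Hb Hs [Hp Ht].
have Hq : 0 < q by rewrite double_gt0 in Hp.
case Hd: (odd (i - s)).
- exists (i - s)./2; split => // t Htq.
  have E0 : z (i + t.*2) = z (i + t.*2 + q.*2) by apply: Ht; rewrite leq_double.
  have [_ A1] := Hb ((i - s)./2 + t).
  have [_ A2] := Hb ((i - s)./2 + t + q).
  have Ei : i - s = ((i - s)./2).*2.+1 by apply: odd_half.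
  apply: (can_inj negbK). rewrite -A1 -A2.
  have -> : (s + ((i - s)./2 + t).*2).+1 = i + t.*2 by rewrite doubleD; nlia.
  have -> : (s + ((i - s)./2 + t + q).*2).+1 = i + t.*2 + q.*2 by rewrite !doubleD; nlia.
  exact: E0.
- exists (i - s)./2; split => // t Htq.
  have E0 : z (i + t.*2) = z (i + t.*2 + q.*2) by apply: Ht; rewrite leq_double.
  have [A1 _] := Hb ((i - s)./2 + t).
  have [A2 _] := Hb ((i - s)./2 + t + q).
  have Ei : i - s = ((i - s)./2).*2 by apply: even_half; rewrite Hd.
  rewrite -A1 -A2.
  have -> : (s + ((i - s)./2 + t).*2) = i + t.*2 by rewrite doubleD; nlia.
  have -> : (s + ((i - s)./2 + t + q).*2) = i + t.*2 + q.*2 by rewrite !doubleD; nlia.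
  exact: E0.
Qed.

Lemma G_even_pred z s y q : Blk z s y -> 0 < s -> OVL z s.-1 q.*2 ->
  OVL (prepend [:: ~~ z s.-1] y) 0 q.
Proof.
move=> Hb Hs [Hp Ht].
have Hq : 0 < q by rewrite double_gt0 in Hp.
split => // -[|t] Htq.
- rewrite /prepend /= add0n ltnNge Hq /=.
  have [_ A] := Hb q.-1.
  rewrite subn1 -[y q.-1]negbK -A.
  have E := Ht 0 (leq0n _). rewrite addn0 in E. rewrite E.
  congr (~~ z _). nlia.
- rewrite /prepend !add0n addSn /= !subn1 /=.
  have [A1 _] := Hb t.
  have [A2 _] := Hb (t + q).
  rewrite -A1 -A2.
  have E0 : z (s.-1 + t.*2.+1) = z (s.-1 + t.*2.+1 + q.*2) by apply: Ht; nlia.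
  have -> : s + t.*2 = s.-1 + t.*2.+1 by nlia.
  rewrite E0. congr z. rewrite doubleD. nlia.
Qed.

Lemma OVL_ext z z' i p : (forall n, z n = z' n) -> OVL z i p -> OVL z' i p.
Proof. move=> E [H1 H2]; split => // t Ht; rewrite -!E; exact: H2. Qed.

Lemma Blk_prepend l l' s : size l = s + (size l').*2 ->
  all (fun k => (nth false l (s + k.*2) == nth false l' k) &&
                (nth false l (s + k.*2).+1 == ~~ nth false l' k)) (iota 0 (size l')) ->
  Blk (prepend l tbar) s (prepend l' tbar).
Proof.
move=> Hsz /allP H k. rewrite /prepend.
case: (ltnP k (size l')) => Hk.
- have := H k; rewrite mem_iota add0n Hk => /(_ isT) /andP [/eqP A /eqP B].
  have -> : s + k.*2 < size l by nlia.
  have -> : (s + k.*2).+1 < size l by nlia.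
  by [].
- have -> : s + k.*2 < size l = false by apply/negbTE; rewrite -leqNgt; nlia.
  have -> : (s + k.*2).+1 < size l = false by apply/negbTE; rewrite -leqNgt; nlia.
  have E1 : s + k.*2 - size l = (k - size l').*2 by rewrite doubleB; nlia.
  have E2 : (s + k.*2).+1 - size l = (k - size l').*2.+1 by rewrite doubleB; nlia.
  rewrite E1 E2. have [T1 T2] := tbar_eo (k - size l'). by rewrite T1 T2.
Qed.

Lemma prepend_cons c l (w : infword) n : prepend [:: c] (prepend l w) n = prepend (c :: l) w n.
Proof. rewrite /prepend; case: n => [|n] //=. by rewrite subn1 /= ltnS subSS. Qed.

Lemma step_gen z s y i p : (forall q, q < p -> forall i', ~ OVL y i' q) ->
  Blk z s y -> s <= i -> ~ OVL z i p.
Proof.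
move=> IH Hb Hs Hov.
case Hp: (odd p); first by apply: (G_odd Hb _ Hp Hov); nlia.
have Ep : p = (p./2).*2 by apply: even_half; rewrite Hp.
have Hp0 := proj1 Hov.
rewrite Ep in Hov. have [i' H'] := G_even_ge Hb Hs Hov.
apply: (IH (p./2) _ i' H'). set h := p./2 in Ep *. nlia.
Qed.

Lemma step_pred z s y c p : (forall q, q < p -> ~ OVL c 0 q) ->
  Blk z s y -> 0 < s -> (forall n, prepend [:: ~~ z s.-1] y n = c n) -> ~ OVL z s.-1 p.
Proof.
move=> IH Hb Hs Hc Hov.
case Hp: (odd p); first by apply: (G_odd Hb _ Hp Hov); nlia.
have Ep : p = (p./2).*2 by apply: even_half; rewrite Hp.
have Hp0 := proj1 Hov.
rewrite Ep in Hov. have H' := G_even_pred Hb Hs Hov.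
apply: (IH (p./2)); last exact: OVL_ext H'. set h := p./2 in Ep *. nlia.
Qed.

Definition L0 := [:: false; false; true; false; false; true].
Definition W0 := prepend L0 tbar.
Definition W1 := prepend [:: true; false] tbar.
Definition W2 := prepend [:: true; true; false] tbar.
Definition W3 := prepend [:: true] tbar.
Definition W4 := prepend [:: false; true] tbar.
Definition W5 := prepend [:: false] tbar.
Definition W6 := prepend [::] tbar.

Lemma W6E n : W6 n = tbar n.
Proof. by rewrite /W6 /prepend /= subn0. Qed.

Lemma B0 : Blk W0 2 W1. Proof. by apply: Blk_prepend. Qed.
Lemma B1 : Blk W1 0 W3. Proof. by apply: Blk_prepend. Qed.
Lemma B2 : Blk W2 1 W3. Proof. by apply: Blk_prepend. Qed.
Lemma B3 : Blk W3 1 W6. Proof. by apply: Blk_prepend. Qed.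
Lemma B4 : Blk W4 0 W5. Proof. by apply: Blk_prepend. Qed.
Lemma B5 : Blk W5 1 W6. Proof. by apply: Blk_prepend. Qed.
Lemma B6 : Blk W6 0 W6. Proof. by apply: Blk_prepend. Qed.

Lemma tbar_small : tbar 0 = true /\ tbar 1 = false /\ tbar 2 = false.
Proof. by []. Qed.

Lemma W0_i0 p : ~ OVL W0 0 p.
Proof.
move=> [Hp Ht].
have V : W0 0 = false /\ W0 1 = false /\ W0 2 = true /\ W0 3 = false /\ W0 4 = false /\ W0 6 = true by [].
case: V => V0 [V1 [V2 [V3 [V4 V6]]]].
case: p Hp Ht => // -[|[|[|p]]] _ Ht.
- by move: (Ht 1 isT); rewrite V1.
- by move: (Ht 0 isT); rewrite V2.
- by move: (Ht 3 isT); rewrite V6.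
- have E0 := Ht 0 isT. have E1 := Ht 1 isT. have E3 := Ht 3 isT. have E4 := Ht 4 isT.
  rewrite !add0n in E0 E1 E3 E4.
  case Hpp: (odd p).
  + have Hodd : ~~ odd (3 + p.+4 - 2).
    { have -> : 3 + p.+4 - 2 = p + 5 by nlia. by rewrite oddD Hpp. }
    have := blk_step B0 (_ : 2 <= 3 + p.+4) Hodd.
    rewrite -[(3 + p.+4).+1]/(4 + p.+4) -E3 -E4 V3 V4. by move=> /(_ isT).
  + have Hodd : ~~ odd (0 + p.+4 - 2).
    { have -> : 0 + p.+4 - 2 = p + 2 by nlia. by rewrite oddD Hpp. }
    have := blk_step B0 (_ : 2 <= 0 + p.+4) Hodd.
    rewrite -[(0 + p.+4).+1]/(1 + p.+4) -E0 -E1 V0 V1. by move=> /(_ isT).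
Qed.

Lemma fam p : forall i, ~ OVL W0 i p /\ ~ OVL W1 i p /\ ~ OVL W2 i p /\ ~ OVL W3 i p /\
  ~ OVL W4 i p /\ ~ OVL W5 i p /\ ~ OVL W6 i p.
Proof.
elim/ltn_ind: p => p IH.
have I1 q (Hq : q < p) i' : ~ OVL W1 i' q := (IH q Hq i').2.1.
have I2 q (Hq : q < p) i' : ~ OVL W2 i' q := (IH q Hq i').2.2.1.
have I3 q (Hq : q < p) i' : ~ OVL W3 i' q := (IH q Hq i').2.2.2.1.
have I4 q (Hq : q < p) i' : ~ OVL W4 i' q := (IH q Hq i').2.2.2.2.1.
have I5 q (Hq : q < p) i' : ~ OVL W5 i' q := (IH q Hq i').2.2.2.2.2.1.
have I6 q (Hq : q < p) i' : ~ OVL W6 i' q := (IH q Hq i').2.2.2.2.2.2.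
move=> i; split; [|split; [|split; [|split; [|split; [|split]]]]].
- case: i => [|[|i]]; first exact: W0_i0.
  + apply: (step_pred (c := W2)) B0 _ _ => //; first by move=> q Hq; apply: I2.
    move=> n. by rewrite prepend_cons.
  + by apply: step_gen B0 _ => // q Hq; apply: I1.
- by apply: step_gen B1 _ => // q Hq; apply: I3.
- case: i => [|i].
  + apply: (step_pred (c := W4)) B2 _ _ => //; first by move=> q Hq; apply: I4.
    move=> n. by rewrite prepend_cons.
  + by apply: step_gen B2 _ => // q Hq; apply: I3.
- case: i => [|i].
  + apply: (step_pred (c := W5)) B3 _ _ => //; first by move=> q Hq; apply: I5.
    move=> n. by rewrite prepend_cons.
  + by apply: step_gen B3 _ => // q Hq; apply: I6.
- by apply: step_gen B4 _ => // q Hq; apply: I5.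
- case: i => [|i].
  + apply: (step_pred (c := W3)) B5 _ _ => //; first by move=> q Hq; apply: I3.
    move=> n. by rewrite prepend_cons.
  + by apply: step_gen B5 _ => // q Hq; apply: I6.
- by apply: step_gen B6 _ => // q Hq; apply: I6.
Qed.

Lemma part1 : overlap_free (prepend [:: false; false; true; false; false; true] tbar).
Proof. apply: free_of_OF => i p. exact: (fam p i).1. Qed.

Definition FD (y T : infword) n := (forall k, k < n -> y k = T k) /\ y n = false /\ T n = true.

Lemma FD_step y T y' T' s n : Blk y s y' -> Blk T s T' -> FD y T n -> s <= n ->
  exists k, n = s + k.*2 /\ FD y' T' k.
Proof.
move=> By BT [Hk [Hy HT]] Hs.
case Ho: (odd (n - s)).
- have En : n = (s + ((n - s)./2).*2).+1 by rewrite -addnS -odd_half // subnKC.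
  have [A1 A2] := By ((n - s)./2). have [C1 C2] := BT ((n - s)./2).
  have L : s + ((n - s)./2).*2 < n by nlia.
  have := Hk _ L.
  rewrite A1 C1 => E. move: Hy HT. by rewrite En A2 C2 E => ->.
- have En : n = s + ((n - s)./2).*2 by rewrite -even_half ?Ho // subnKC.
  exists (n - s)./2; split => //. split; last first.
    have [A1 _] := By ((n - s)./2). have [C1 _] := BT ((n - s)./2).
    by rewrite -A1 -C1 -En.
  move=> k Hk'. have [A1 _] := By k. have [C1 _] := BT k.
  rewrite -A1 -C1; apply: Hk. nlia.
Qed.

Lemma OF_blk y s y' : Blk y s y' -> OF y -> OF y'.
Proof.
move=> B H i p [Hp Ht]. apply: (H (s + i.*2) p.*2); split; first by rewrite double_gt0.
move=> t Htp. case Ho: (odd t).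
- have Et : t = (t./2).*2.+1 by apply: odd_half.
  have Ht2 : t./2 < p by rewrite Et in Htp; nlia.
  have [_ A1] := B (i + t./2). have [_ A2] := B (i + t./2 + p).
  have -> : s + i.*2 + t + p.*2 = (s + (i + t./2 + p).*2).+1 by rewrite {1}Et !doubleD; nlia.
  have -> : s + i.*2 + t = (s + (i + t./2).*2).+1 by rewrite {1}Et doubleD; nlia.
  by rewrite A1 A2 (Ht _ (ltnW Ht2)).
- have Et : t = (t./2).*2 by apply: even_half; rewrite Ho.
  have Ht2 : t./2 <= p by rewrite Et in Htp; nlia.
  have [A1 _] := B (i + t./2). have [A2 _] := B (i + t./2 + p).
  have -> : s + i.*2 + t + p.*2 = s + (i + t./2 + p).*2 by rewrite {1}Et !doubleD; nlia.
  have -> : s + i.*2 + t = s + (i + t./2).*2 by rewrite {1}Et doubleD; nlia.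
  by rewrite A1 A2 (Ht _ Ht2).
Qed.

Definition ovlb (s : seq bool) i p := (0 < p) && (i + p.*2 < size s) &&
  all (fun t => nth false s (i + t) == nth false s (i + t + p)) (iota 0 p.+1).
Definition ofw (s : seq bool) :=
  ~~ has (fun i => has (ovlb s i) (iota 0 (size s))) (iota 0 (size s)).

Lemma ofw_win y j L : OF y -> ofw (mkseq (fun k => y (j + k)) L).
Proof.
move=> H. apply/negP => /hasP [i _ /hasP [p _ Hb]].
move: Hb => /andP [/andP [Hp Hsz] /allP Hall].
rewrite size_mkseq in Hsz.
apply: (H (j + i) p); split => // t Ht.
have := Hall t; rewrite mem_iota add0n ltnS Ht => /(_ isT) /eqP.
rewrite !nth_mkseq; try nlia. by rewrite !addnA.
Qed.

Lemma win7 (s : seq bool) : size s = 7 -> ofw s -> nth false s 1 = nth false s 2 ->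
  [&& nth false s 2 != nth false s 3, nth false s 4 != nth false s 5 &
     (nth false s 3 == nth false s 4) || (nth false s 5 == nth false s 6)].
Proof.
case: s => [|b0 [|b1 [|b2 [|b3 [|b4 [|b5 [|b6 [|]]]]]]]] //= _.
by case: b0; case: b1; case: b2; case: b3; case: b4; case: b5; case: b6; vm_compute.
Qed.

Lemma parity y d : OF y -> forall i, 0 < i -> y i = y i.+1 -> y (i + d) = y (i + d).+1 -> ~~ odd d.
Proof.
move=> HOF; elim/ltn_ind: d => d IH i Hi Hpi Hpd.
set s := mkseq (fun k => y (i.-1 + k)) 7.
have W := win7 (size_mkseq _ _) (ofw_win i.-1 7 HOF).
have Ny k : k < 7 -> nth false s k = y (i.-1 + k) by move=> Hk; rewrite nth_mkseq.
have Ei k : i.-1 + k.+1 = i + k by nlia.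
rewrite -/s !Ny // !Ei addn0 in W.
have /W /and3P [H12 H34 Hor] : y i = y (i + 1) by rewrite addn1.
case: d IH Hpd => [|[|[|[|[|d]]]]] IH Hpd //.
- rewrite -addnS in Hpd. by rewrite Hpd eqxx in H12.
- rewrite -(addnS i 3) in Hpd. by rewrite Hpd eqxx in H34.
- case/orP: Hor => /eqP Hor.
  + have P1 : y (i + 2) = y (i + 2).+1 by rewrite -addnS.
    have P2 : y (i + 2 + d.+3) = y (i + 2 + d.+3).+1 by rewrite -addnA.
    have := IH d.+3 (ltnW (ltnSn _)) (i + 2) (ltn_addr _ Hi) P1 P2.
    by rewrite /= !negbK.
  + have P1 : y (i + 4) = y (i + 4).+1 by rewrite -addnS.
    have P2 : y (i + 4 + d.+1) = y (i + 4 + d.+1).+1 by rewrite -addnA.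
    have := IH d.+1 _ (i + 4) (ltn_addr _ Hi) P1 P2.
    rewrite /= !negbK. apply. nlia.
Qed.

Lemma noblk y q u : OF y -> 0 < q -> y q = y q.+1 -> 0 < u -> odd u != odd q -> y u.+1 = ~~ y u.
Proof.
move=> HOF Hq Hpq Hu Hodd.
case E: (y u.+1 == ~~ y u); first exact/eqP.
have Hpu : y u = y u.+1 by move: E; case: (y u); case: (y u.+1).
case: (leqP q u) => Hqu.
- have := @parity y (u - q) HOF q Hq Hpq. rewrite subnKC // => /(_ Hpu).
  by rewrite oddB // ; move: Hodd; case: (odd u); case: (odd q).
- have := @parity y (q - u) HOF u Hu Hpu. rewrite subnKC ?(ltnW Hqu) // => /(_ Hpq).
  by rewrite oddB ?(ltnW Hqu) //; move: Hodd; case: (odd u); case: (odd q).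
Qed.

Lemma tbar_min j : forall y, OF y -> 0 < j -> FD y tbar j -> False.
Proof.
elim/ltn_ind: j => j IH y HOF Hj [Hk [Hy HT]].
case: (ltnP j 3) => Hj3.
  by move: HT Hj Hj3; case: j {IH Hk Hy} => [|[|[|]]] //; vm_compute.
have [T0 [T1 T2]] := tbar_small.
have Y0 : y 0 = true by rewrite Hk.
have Y1 : y 1 = false by rewrite Hk //; nlia.
have Y2 : y 2 = false by rewrite Hk //; nlia.
set y' := fun k => y k.*2.
have By : Blk y 0 y'.
  move=> k; split; first by rewrite add0n.
  rewrite add0n. case: k => [|k]; first by rewrite /y' /= Y0 Y1.
  apply: (@noblk y 1) => //; first by rewrite Y1 Y2.
  by rewrite odd_double.
have Bt : Blk tbar 0 tbar by move=> k; rewrite add0n; exact: tbar_eo.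
have [k [Ej FD']] := FD_step By Bt (conj Hk (conj Hy HT)) (leq0n _).
apply: (IH k _ y' (OF_blk By HOF) _ FD'); nlia.
Qed.

Fixpoint ext (s : seq bool) d :=
  if d is d'.+1 then ofw s && (ext (rcons s false) d' || ext (rcons s true) d') else ofw s.

Lemma pref_ofw w s : OF w -> (forall k, k < size s -> w k = nth false s k) -> ofw s.
Proof.
move=> HOF Hs.
have -> : s = mkseq (fun k => w (0 + k)) (size s).
  apply: (@eq_from_nth _ false); rewrite ?size_mkseq // => k Hk.
  by rewrite nth_mkseq // add0n Hs.
exact: ofw_win.
Qed.

Lemma ext_sound w d : OF w -> forall s, (forall k, k < size s -> w k = nth false s k) -> ext s d.
Proof.
move=> HOF; elim: d => [|d IH] s Hs; first exact: pref_ofw Hs.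
rewrite /= (pref_ofw HOF Hs) /=. apply/orP.
have Hr b : w (size s) = b -> ext (rcons s b) d.
  move=> Hb; apply: IH => k; rewrite size_rcons nth_rcons ltnS leq_eqVlt.
  case/orP => [/eqP ->|Hk]; first by rewrite ltnn eqxx.
  by rewrite Hk Hs.
case Hb: (w (size s)); [right|left]; exact: Hr.
Qed.

Definition mp := L0 ++ M 5.

Lemma W0_nth k : k < 38 -> W0 k = nth false mp k.
Proof.
move=> Hk. rewrite /W0 /prepend /mp nth_cat. case: ifP => // Hk'.
move/negbT: Hk'; rewrite -leqNgt /= => Hk'.
rewrite (@tbar_M 5) // (_ : 2 ^ 5 = 32) //. nlia.
Qed.

Lemma fin_check : all (fun n => ~~ nth false mp n || ~~ ext (rcons (take n mp) false) 2) (iota 0 18).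
Proof. by vm_compute. Qed.

Lemma m_min w n : OF w -> FD w W0 n -> False.
Proof.
move=> HOF [Hk [Hw HW]].
case: (ltnP n 18) => Hn.
  have := allP fin_check n; rewrite mem_iota add0n Hn => /(_ isT).
  rewrite -W0_nth; last by nlia.
  rewrite HW => /orP [//|/negP]; apply; apply: (ext_sound 2 HOF) => k.
  have Hsz : size mp = 38 by rewrite /mp size_cat size_M.
  rewrite size_rcons size_take /=.
  have -> : n < size mp by rewrite Hsz; nlia.
  rewrite ltnS leq_eqVlt nth_rcons size_take.
  have -> : n < size mp by rewrite Hsz; nlia.
  case/orP => [/eqP ->|Hkn]; first by rewrite ltnn eqxx.
  rewrite Hkn nth_take // -W0_nth ?Hk //. nlia.
have V : W0 3 = false /\ W0 4 = false /\ W1 0 = true /\ W1 1 = false /\ W1 3 = false /\ W1 4 = false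
  /\ W3 2 = false /\ W3 3 = false by [].
case: V => V03 [V04 [V10 [V11 [V13 [V14 [V32 V33]]]]]].
set y1 := fun k => w (2 + k.*2).
have Bw : Blk w 2 y1.
  move=> k; split => //.
  apply: (@noblk w 3) => //; first by rewrite !Hk ?V03 ?V04 //; nlia.
  by rewrite oddD odd_double.
have H2n : 2 <= n by nlia.
have [n1 [En FD1]] := FD_step Bw B0 (conj Hk (conj Hw HW)) H2n.
have OF1 := OF_blk Bw HOF.
case: FD1 => [Hk1 [Hw1 HW1]].
set y2 := fun k => y1 k.*2.
have By1 : Blk y1 0 y2.
  move=> k; split; first by rewrite add0n.
  rewrite add0n. case: k => [|k].
    rewrite /y2 /= !Hk1 ?V10 ?V11 //; nlia.
  apply: (@noblk y1 3) => //; first by rewrite !Hk1 ?V13 ?V14 //; nlia.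
  by rewrite odd_double.
have [n2 [En1 FD2]] := FD_step By1 B1 (conj Hk1 (conj Hw1 HW1)) (leq0n _).
have OF2 := OF_blk By1 OF1.
case: FD2 => [Hk2 [Hw2 HW2]].
set y3 := fun k => y2 (1 + k.*2).
have By2 : Blk y2 1 y3.
  move=> k; split => //.
  apply: (@noblk y2 2) => //; first by rewrite !Hk2 ?V32 ?V33 //; nlia.
  by rewrite oddD odd_double.
have H1n : 1 <= n2 by nlia.
have [n3 [En2 [Hk3 [Hw3 HW3]]]] := FD_step By2 B3 (conj Hk2 (conj Hw2 HW2)) H1n.
apply: (tbar_min (OF_blk By2 OF2) (_ : 0 < n3)); first by nlia.
split; last by rewrite -W6E.
move=> k Hk'; rewrite -W6E; exact: Hk3.
Qed.

Theorem theorem5 :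
  overlap_free (prepend [:: false; false; true; false; false; true] tbar) /\
  (forall w : infword, overlap_free w ->
     lex_le (prepend [:: false; false; true; false; false; true] tbar) w).
Proof.
split; first exact: part1.
move=> w Hw. have HOF := OF_of_free Hw.
case: (classic (forall n, W0 n = w n)) => H; first by left.
right.
have [n Hn] : exists n, ~ (W0 n = w n) by apply: not_all_ex_not.
have Hex : exists n, W0 n != w n by exists n; apply/eqP.
case: (ex_minnP Hex) => m Hm Hmin.
have Hag k : k < m -> W0 k = w k.
  move=> Hk; apply/eqP; apply: contraTT Hk => Hne; rewrite -leqNgt; exact: Hmin.
case Wm : (W0 m).
- exfalso; apply: (m_min HOF (n := m)); split; first by move=> k Hk; rewrite Hag.
  split => //. by move: Hm; rewrite Wm; case: (w m).
- exists m; split => //; split => //. by move: Hm; rewrite Wm; case: (w m).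
Qed.
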